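(* Let $n\ge2$ and let $k$ be a positive integer with $k\le n-1$. For $\delta_1,\dots,\delta_{n-2}\in\{\mathsf A,\mathsf D\}$, consider $\delta=(\delta_1,\dots,\delta_{n-2},\mathsf A,\mathsf D)$ and $\delta'=(\delta_1,\dots,\delta_{n-2},\mathsf D,\mathsf A)$ in $\{\mathsf A,\mathsf D\}^n$. Then $$\mathbf{i}_\delta(\underbrace{0,\dots,0}_{n-1},k)\sim\mathbf{i}_{\delta'}(\underbrace{0,\dots,0}_{n-1},n-k-1).$$
   Context: $\mathfrak{S}_{m+1}$ is generated by $s_i=(i,i+1)$; $R(w_0^{(m+1)})$ is the set of reduced words $(i_1,\dots,i_{\bar m})\in[m]^{\bar m}$, $\bar m=m(m+1)/2$, of its longest element, with $R(w_0^{(1)})=\{\emptyset\}$. A 2-move exchanges two consecutive letters $i,j$ with $|i-j|>1$; $\mathbf{i}\sim\mathbf{i}'$ means the words are related by a sequence of 2-moves. For a word $\mathbf j$, $\mathbf j+1$ adds 1 to each letter. Extensions: for $\mathbf{i}=(i_1,\dots,i_{\bar m})\in R(w_0^{(m+1)})$ and $s\in\{0,\dots,\bar m\}$, with $\mathbf{i}^-(s)=(i_1,\dots,i_{\bar m-s})$ and $\mathbf{i}^+(s)=(i_{\bar m-s+1},\dots,i_{\bar m})$, set $E_{\mathsf D}(s)(\mathbf{i})=(\mathbf{i}^-(s),m+1,m,\dots,1,\mathbf{i}^+(s)+1)$ and $E_{\mathsf A}(s)(\mathbf{i})=(\mathbf{i}^-(s)+1,1,2,\dots,m+1,\mathbf{i}^+(s))$,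 elements of $R(w_0^{(m+2)})$. For $\delta\in\{\mathsf A,\mathsf D\}^n$ and $I=(I_1,\dots,I_n)$ with $0\le I_j\le j(j-1)/2$, define $\mathbf{i}_\delta(I)=(E_{\delta_n}(I_n)\circ\cdots\circ E_{\delta_2}(I_2)\circ E_{\delta_1}(I_1))(\emptyset)\in R(w_0^{(n+1)})$. *)

(* Defs.v *)
From Stdlib Require Import Relation_Operators.
From mathcomp Require Import all_boot.
Set Implicit Arguments. Unset Strict Implicit. Unset Printing Implicit Defensive.

Inductive AD : Type := A | D.

Definition two_move (w w' : seq nat) : Prop :=
  exists (a b : seq nat) (i j : nat),
    1 < (if i <= j then j - i else i - j) /\
    w = a ++ [:: i; j] ++ b /\ w' = a ++ [:: j; i] ++ b.

Definition move_equiv : seq nat -> seq nat -> Prop := @clos_refl_trans (seq nat) two_move.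

Definition barm (m : nat) : nat := (m * m.+1) %/ 2.

(* E_D(s) and E_A(s) applied to a word of R(w_0^{(m+1)}) *)
Definition ext_D (m s : nat) (w : seq nat) : seq nat :=
  take (barm m - s) w ++ rev (iota 1 m.+1) ++ map S (drop (barm m - s) w).
Definition ext_A (m s : nat) (w : seq nat) : seq nat :=
  map S (take (barm m - s) w) ++ iota 1 m.+1 ++ drop (barm m - s) w.

Definition ext (d : AD) (m s : nat) (w : seq nat) : seq nat :=
  match d with A => ext_A m s w | D => ext_D m s w end.

(* i_delta(I) = (E_{delta_n}(I_n) o ... o E_{delta_1}(I_1))(empty);
   step j (1-based) acts on a word of R(w_0^{(j)}), i.e. m = j - 1. *)
Definition iword (delta : seq AD) (I : seq nat) : seq nat :=
  foldl (fun w (p : nat * (AD * nat)) => ext p.2.1 p.1 p.2.2 w) [::]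
        (zip (iota 0 (size delta)) (zip delta I)).

(* Main.v *)
Require Import Defs.
From Stdlib Require Import Relation_Operators.
From mathcomp Require Import all_boot zify.

Definition okp (x y : nat) := 1 < (if x <= y then y - x else x - y).

Lemma okp_lt x y : x.+1 < y -> okp x y.
Proof. move=> H; rewrite /okp; case: ifP => h; lia. Qed.

Lemma swap1 (x : nat) (R : seq nat) : (forall y, y \in R -> okp x y) ->
  forall l r, move_equiv (l ++ x :: R ++ r) (l ++ R ++ x :: r).
Proof.
elim: R => [|y R IH] H l r /=; first exact: rt_refl.
apply: rt_trans (_ : move_equiv _ (rcons l y ++ x :: R ++ r)) _.
  apply: rt_step; exists l, (R ++ r), x, y; split; first by apply: H; rewrite inE eqxx.
  by rewrite cat_rcons.
have := IH _ (rcons l y) r; rewrite !cat_rcons; apply.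
move=> z Hz; apply: H; by rewrite inE Hz orbT.
Qed.

Lemma swapb (P R : seq nat) : (forall x y, x \in P -> y \in R -> okp x y) ->
  forall l r, move_equiv (l ++ P ++ R ++ r) (l ++ R ++ P ++ r).
Proof.
elim: P => [|x P IH] H l r /=; first exact: rt_refl.
apply: rt_trans (_ : move_equiv _ (l ++ x :: R ++ P ++ r)) _.
  have := IH _ (rcons l x) r; rewrite !cat_rcons; apply.
  move=> a b Ha Hb; apply: H => //; by rewrite inE Ha orbT.
have HH : forall y, y \in R -> okp x y by move=> y Hy; apply: H => //; rewrite inE eqxx.
exact: (@swap1 x R HH l (P ++ r)).
Qed.

Lemma key V a b :
  move_equiv (V ++ iota 1 a ++ rev (iota 1 (a+b).+1) ++ iota (a+2) b)
             (V ++ rev (iota (a+2) b) ++ iota 1 (a+b).+1 ++ rev (iota 1 a)).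
Proof.
have E : iota 1 (a+b).+1 = iota 1 a ++ a.+1 :: iota (a+2) b.
  by rewrite -addnS iotaD /= add1n addn2.
rewrite E rev_cat rev_cons cat_rcons.
set P := iota 1 a; set Q := iota (a+2) b.
have HP : forall x, x \in P -> x <= a by move=> x; rewrite mem_iota; lia.
have HQ : forall y, y \in Q -> a + 2 <= y by move=> y; rewrite mem_iota; lia.
apply: rt_trans (_ : move_equiv _ (V ++ rev Q ++ P ++ a.+1 :: rev P ++ Q)) _.
  rewrite -!catA /=. apply: swapb => x y Hx Hy; apply: okp_lt.
  rewrite mem_rev in Hy; have := HP _ Hx; have := HQ _ Hy; lia.
rewrite -!catA /=.
have -> : V ++ rev Q ++ P ++ a.+1 :: rev P ++ Q = (V ++ rev Q ++ P ++ [:: a.+1]) ++ rev P ++ Q ++ [::].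
  by rewrite cats0 -!catA.
have -> : V ++ rev Q ++ P ++ a.+1 :: Q ++ rev P = (V ++ rev Q ++ P ++ [:: a.+1]) ++ Q ++ rev P ++ [::].
  by rewrite cats0 -!catA.
apply: swapb => x y Hx Hy; apply: okp_lt.
rewrite mem_rev in Hx; have := HP _ Hx; have := HQ _ Hy; lia.
Qed.

Lemma barmS m : barm m.+1 = barm m + m.+1.
Proof. rewrite /barm. lia. Qed.

Lemma size_ext d m s w : size (ext d m s w) = size w + m.+1.
Proof.
case: d => /=; rewrite /ext_A /ext_D !size_cat ?size_map ?size_rev size_iota;
  rewrite -[in RHS](cat_take_drop (barm m - s) w) size_cat; lia.
Qed.

Lemma size_fold (delta : seq AD) (I : seq nat) j w :
  size delta = size I -> size w = barm j ->
  size (foldl (fun w (p : nat * (AD * nat)) => ext p.2.1 p.1 p.2.2 w) w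
        (zip (iota j (size delta)) (zip delta I))) = barm (j + size delta).
Proof.
elim: delta I j w => [|d delta IH] [|i I] //= j w; first by rewrite addn0.
move=> [] Hs Hw; rewrite IH //; first by rewrite addSnnS.
by rewrite size_ext Hw barmS.
Qed.

Lemma iword_last (delta0 : seq AD) x y k m :
  size delta0 = m ->
  iword (delta0 ++ [:: x; y]) (nseq m.+1 0 ++ [:: k]) =
  ext y m.+1 k (ext x m 0 (iword delta0 (nseq m 0))).
Proof.
move=> Hs; rewrite /iword size_cat Hs addn2.
have -> : iota 0 m.+2 = iota 0 m ++ [:: m; m.+1] by rewrite -addn2 iotaD.
have -> : nseq m.+1 0 ++ [:: k] = nseq m 0 ++ [:: 0; k] by elim: (m) => //= m' ->.
rewrite zip_cat ?size_nseq // zip_cat ?size_iota ?size_zip ?size_nseq ?Hs ?minnn //.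
by rewrite foldl_cat.
Qed.

Lemma take_addcat (s1 s2 : seq nat) a : take (size s1 + a) (s1 ++ s2) = s1 ++ take a s2.
Proof. by elim: s1 => //= x s1 ->. Qed.
Lemma drop_addcat (s1 s2 : seq nat) a : drop (size s1 + a) (s1 ++ s2) = drop a s2.
Proof. by elim: s1. Qed.

Lemma mapS_iota x n : map S (iota x n) = iota x.+1 n.
Proof. by elim: n x => //= n IH x; rewrite IH. Qed.

Theorem lemma5p5 (n k : nat) (delta0 : seq AD) :
  2 <= n -> 0 < k -> k <= n - 1 -> size delta0 = n - 2 ->
  move_equiv (iword (delta0 ++ [:: A; D]) (nseq (n - 1) 0 ++ [:: k]))
             (iword (delta0 ++ [:: D; A]) (nseq (n - 1) 0 ++ [:: n - k - 1])).
Proof.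
case: n => [|[|m]] // _ Hk Hkn Hs.
rewrite subn2 /= in Hs; rewrite subn1 /=.
rewrite !iword_last //.
set v := iword delta0 (nseq m 0).
have Hv : size v = barm m.
  by rewrite /v /iword size_fold ?size_nseq ?Hs.
set a := m.+1 - k.
have Ea : m.+2 - k - 1 = a by rewrite /a; lia.
have Em : m.+1 = a + k by rewrite /a; lia.
rewrite Ea; cbv beta iota delta [ext]; rewrite /ext_A /ext_D !subn0 -!Hv take_size drop_size cats0.
have -> : barm m.+1 - k = size (map S v) + a by rewrite size_map barmS -Hv /a; lia.
rewrite take_addcat drop_addcat.
have -> : barm m.+1 - a = size v + k by rewrite barmS -Hv /a; lia.
rewrite take_addcat drop_addcat Em iotaD rev_cat.
have Hr : size (rev (iota (1 + a) k)) = k by rewrite size_rev size_iota.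
rewrite [map S [::]]/= cats0 (take_size_cat _ Hr) (drop_size_cat _ Hr).
have Ha : size (iota 1 a) = a by rewrite size_iota.
rewrite (take_size_cat _ Ha) (drop_size_cat _ Ha) map_cat map_rev !mapS_iota add1n -!catA.
have := key [seq i.+1 | i <- v] a k.
by rewrite addn2.
Qed.
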